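(* Consider two-value instances, i.e. instances in which every interval has length either $k/\Delta$ (short) or $k$ (long). Let $\textsc{Alg}$ be any deterministic online algorithm that receives the full prediction $\hat{\mathbf{I}}$. If there is $\epsilon>0$ such that for every two-value instance $\mathcal{I}$ and every prediction, $|\textsc{Opt}(\mathcal{I})| \le \Delta\cdot|\textsc{Alg}(\mathcal{I})| + \frac{k}{\Delta} - \epsilon$, then there is a two-value instance $\mathcal{I}$ whose prediction $\hat{\mathbf{I}}$ is accurate and on which $|\textsc{Opt}(\mathcal{I})| \ge \Delta\cdot|\textsc{Alg}(\mathcal{I})|$; that is, $\textsc{Alg}$ cannot be better than $\Delta$-consistent.
   Context: Online interval scheduling: intervals $I_j$ with release time $r_j$, deadline $d_j$, length $l_j=d_j-r_j$ arrive online in non-decreasing order of release time; each must be irrevocably accepted or rejected upon arrival; accepted intervals must be pairwise non-overlapping; objective: maximize the total accepted length $|\cdot|$. $\textsc{Opt}(\mathcal{I})$ is an optimal offline solution. $k=\max_j l_j$, $\Delta=k/\min_j l_j$. The full prediction $\hat{\mathbf{I}}=\{(\hat r_1,\hat d_1),\dots,(\hat r_n,\hat d_n)\}$ gives a predicted release time and deadline for every interval and is available to the algorithm in advance; it is accurate if it coincides with the actual instance. An algorithm is $\alpha$-consistent if $|\textsc{Opt}(\mathcal{I})|\le\alpha|\textsc{Alg}(\mathcal{I})|$ on all instances with accurate predictions. *)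

(* Defs.v *)
From HB Require Import structures.
From mathcomp Require Import all_boot all_order all_algebra.
From mathcomp Require Import reals.
Set Implicit Arguments. Unset Strict Implicit. Unset Printing Implicit Defensive.
Import Order.TTheory GRing.Theory Num.Theory.
Local Open Scope ring_scope.

Section IntervalScheduling.
Variable R : realType.

(* An interval is a pair (release time r, deadline d). *)
Definition ilen (I : R * R) : R := I.2 - I.1.

Definition idisj (I J : R * R) : bool := (I.2 <= J.1) || (J.2 <= I.1).

Definition release_sorted (s : seq (R * R)) : bool :=
  sorted (fun I J : R * R => I.1 <= J.1) s.

Definition two_value (k Delta : R) (s : seq (R * R)) : bool :=
  all (fun I => (ilen I == k / Delta) || (ilen I == k)) s.

(* A deterministic online algorithm with full prediction: given the
   prediction (known in advance) and the sequence of intervals revealed so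
   far (the last one being the current interval), it decides to accept
   (true) or reject (false) the current interval. Its decisions are
   irrevocable. An acceptance that would overlap an already accepted
   interval is not executed (equivalently: algorithms are feasible). *)
Definition online_alg := seq (R * R) -> seq (R * R) -> bool.

Fixpoint run_aux (alg : online_alg) (pred past acc rest : seq (R * R))
  : seq (R * R) :=
  match rest with
  | [::] => acc
  | J :: rest' =>
      let hist := rcons past J in
      let acc' := if alg pred hist && all (idisj J) acc then rcons acc J
                  else acc in
      run_aux alg pred hist acc' rest'
  end.

Definition alg_accepted (alg : online_alg) (pred inst : seq (R * R)) :=
  run_aux alg pred [::] [::] inst.

Definition alg_value (alg : online_alg) (pred inst : seq (R * R)) : R :=
  \sum_(I <- alg_accepted alg pred inst) ilen I.

Definition feasible_set (inst : seq (R * R)) (A : {set 'I_(size inst)}) : bool :=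
  [forall i in A, forall j in A,
     (i != j) ==> idisj (nth (0, 0) inst i) (nth (0, 0) inst j)].

Definition opt_value (inst : seq (R * R)) : R :=
  \big[Num.max/0]_(A : {set 'I_(size inst)} | feasible_set A)
     \sum_(i in A) ilen (nth (0, 0) inst i).

End IntervalScheduling.

(* Main.v *)
Require Import Defs.
From HB Require Import structures.
From mathcomp Require Import all_boot all_order all_algebra.
From mathcomp Require Import reals.
From mathcomp Require Import ring lra.
Import Order.TTheory GRing.Theory Num.Theory.
Set Implicit Arguments. Unset Strict Implicit.
Local Open Scope ring_scope.
From mathcomp Require Import zify.

Definition Sh (R : realType) (k h : R) (i : nat) : R * R := (k * i%:R, k * i%:R + h).
Definition Lg (R : realType) (k h : R) (i : nat) : R * R :=
  (k * i%:R + h / 2, k * i%:R + h / 2 + k).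
Definition shorts (R : realType) (k h : R) (m : nat) := mkseq (Sh k h) m.
Definition U (R : realType) (k h : R) (n j : nat) :=
  shorts k h j.+1 ++ nseq (n - j.+1) (Lg k h j).

Lemma size_U (R : realType) (k h : R) n j : (j < n)%N -> size (U k h n j) = n.
Proof. by move=> H; rewrite size_cat size_mkseq size_nseq subnKC. Qed.

Lemma nth_U (R : realType) (k h : R) n j i : (i < n)%N ->
  nth (0, 0) (U k h n j) i = if (i < j.+1)%N then Sh k h i else Lg k h j.
Proof.
move=> Hi; rewrite nth_cat size_mkseq; case: ltnP => H.
  by rewrite nth_mkseq.
rewrite nth_nseq; case: ltnP => //; lia.
Qed.

Lemma Sh_le (R : realType) (k h : R) i j : 0 <= k -> 0 <= h -> h <= k ->
  (i < j)%N -> (Sh k h i).2 <= (Sh k h j).1.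
Proof.
move=> k0 h0 hk Hij /=.
have Hn : i%:R + 1 <= j%:R :> R by rewrite natr1 ler_nat.
have Hn' : 0 <= j%:R - (i%:R + 1) :> R by rewrite subr_ge0.
have := mulr_ge0 k0 Hn'.
rewrite mulrBr mulrDr mulr1; lra.
Qed.
Lemma run_cat (R : realType) (alg : online_alg R) pred pre post past acc :
  run_aux alg pred past acc (pre ++ post) =
  run_aux alg pred (past ++ pre) (run_aux alg pred past acc pre) post.
Proof.
elim: pre past acc => [|x pre IH] past acc /=; first by rewrite cats0.
by rewrite IH cat_rcons.
Qed.

Lemma run_block (R : realType) (alg : online_alg R) pred J m past acc :
  ~~ all (idisj J) acc -> run_aux alg pred past acc (nseq m J) = acc.
Proof.
move=> H; elim: m past => [|m IH] past //=.
by rewrite (negbTE H) andbF IH.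
Qed.

Lemma opt_ge (R : realType) (inst : seq (R * R)) (A : {set 'I_(size inst)}) :
  feasible_set A -> \sum_(i in A) ilen (nth (0, 0) inst i) <= opt_value inst.
Proof.
move=> HA; rewrite /opt_value.
exact: (le_bigmax_cond 0 (fun A0 : {set 'I_(size inst)} => \sum_(i in A0) ilen (nth (0, 0) inst i)) HA).
Qed.

Lemma opt_ge1 (R : realType) (inst : seq (R * R)) (i : nat) :
  (i < size inst)%N -> ilen (nth (0, 0) inst i) <= opt_value inst.
Proof.
move=> Hi; have := @opt_ge R inst [set Ordinal Hi].
rewrite big_set1 /=; apply.
apply/forallP => a; apply/implyP; rewrite in_set1 => /eqP ->.
apply/forallP => b; apply/implyP; rewrite in_set1 => /eqP ->.
by rewrite eqxx.
Qed.

Lemma opt_ge2 (R : realType) (inst : seq (R * R)) (i j : nat) :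
  (i < size inst)%N -> (j < size inst)%N -> i <> j ->
  idisj (nth (0, 0) inst i) (nth (0, 0) inst j) ->
  idisj (nth (0, 0) inst j) (nth (0, 0) inst i) ->
  ilen (nth (0, 0) inst i) + ilen (nth (0, 0) inst j) <= opt_value inst.
Proof.
move=> Hi Hj Hij D1 D2.
have Hne : Ordinal Hi \notin [set Ordinal Hj].
  by rewrite in_set1; apply/eqP => -[].
have := @opt_ge R inst (Ordinal Hi |: [set Ordinal Hj]).
rewrite big_setU1 //= big_set1 /=; apply.
apply/forallP => a; apply/implyP; rewrite !inE => Ha.
apply/forallP => b; apply/implyP; rewrite !inE => Hb.
apply/implyP.
by case/orP: Ha => /eqP ->; case/orP: Hb => /eqP -> //; rewrite eqxx.
Qed.

Lemma accs_step (R : realType) (alg : online_alg R) (P : seq (R * R)) (k h : R) m :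
  run_aux alg P [::] [::] (shorts k h m.+1) =
  let a := run_aux alg P [::] [::] (shorts k h m) in
  if alg P (shorts k h m.+1) && all (idisj (Sh k h m)) a
  then rcons a (Sh k h m) else a.
Proof. by rewrite {1}/shorts mkseqS -cats1 run_cat /= -mkseqS. Qed.

Lemma accs_nil (R : realType) (alg : online_alg R) (P : seq (R * R)) (k h : R) m :
  run_aux alg P [::] [::] (shorts k h m) = [::] ->
  run_aux alg P [::] [::] (shorts k h m.+1) = [::] \/
  run_aux alg P [::] [::] (shorts k h m.+1) = [:: Sh k h m].
Proof. by rewrite accs_step /= => ->; case: (alg _ _); [right|left]. Qed.

Lemma accs_ind (R : realType) (alg : online_alg R) (P : seq (R * R)) (k h : R) :
  run_aux alg P [::] [::] (shorts k h 1) = [::] -> forall m, (1 <= m)%N ->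
  run_aux alg P [::] [::] (shorts k h m) = [::] \/
  exists j, (1 <= j < m)%N /\ run_aux alg P [::] [::] (shorts k h j.+1) = [:: Sh k h j].
Proof.
move=> H1; elim=> [//|m IH] Hm.
case: m IH Hm => [|m] IH _; first by left.
case: (IH isT) => [Hn|[j [Hj Hj']]].
  case: (accs_nil Hn) => H; first by left.
  right; exists m.+1; split; [lia | exact H].
right; exists j; split => //; lia.
Qed.

Theorem mainTheorem4 (R : realType) (k Delta : R) (alg : online_alg R) :
  0 < k -> 1 < Delta ->
  (exists2 eps : R, 0 < eps &
     forall inst pred : seq (R * R),
       release_sorted inst -> two_value k Delta inst ->
       size pred = size inst ->
       opt_value inst <= Delta * alg_value alg pred inst + k / Delta - eps) ->
  exists inst : seq (R * R),
    [/\ inst != [::], release_sorted inst, two_value k Delta inst &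
        Delta * alg_value alg inst inst <= opt_value inst].
Proof.
move=> k0 D1 [eps e0 Hyp].
set h := k / Delta.
have kE : k = Delta * h by rewrite /h mulrC divfK // gt_eqF // (lt_trans ltr01).
have h0 : 0 < h by rewrite /h divr_gt0 // (lt_trans ltr01).
have hk : h < k.
  have HD : 0 < Delta - 1 by rewrite subr_gt0.
  have := mulr_gt0 HD h0; rewrite mulrBl mul1r -kE; lra.
set m := Num.trunc Delta.
have HnD : Delta + 1 < m.+2%:R.
  have := truncn_le_nat Delta m; rewrite leqnn => /esym H.
  by rewrite -natr1 ltrD2r.
have k0' : 0 <= k by apply: ltW.
have mono : forall a b, (a <= b)%N -> k * a%:R <= k * b%:R.
  by move=> a b Hab; rewrite ler_wpM2l // ler_nat.
have twoS : forall i, ilen (Sh k h i) == k / Delta.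
  by move=> i; apply/eqP; rewrite /ilen /= -/h; lra.
have twoL : forall i, ilen (Lg k h i) == k.
  by move=> i; apply/eqP; rewrite /ilen /=; lra.
have sortU : forall j, (j < m.+2)%N -> release_sorted (U k h m.+2 j).
  move=> j Hj; apply/(sortedP (0,0)) => i; rewrite size_U // => Hi.
  rewrite !nth_U //; last by lia.
  case: (ltnP i j.+1) => H1; case: (ltnP i.+1 j.+1) => H2 /=.
  - by apply: mono.
  - have := mono i j; rewrite -ltnS => /(_ H1); lra.
  - lia.
  - by [].
have twoU : forall j, two_value k Delta (U k h m.+2 j).
  move=> j; apply/allP => x; rewrite mem_cat => /orP [|/nseqP [-> _]].
    by rewrite /shorts /mkseq => /mapP [i _ ->]; rewrite twoS.
  by rewrite twoL orbT.
set P := U k h m.+2 0.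
have runU : forall j, (j < m.+2)%N ->
    run_aux alg P [::] [::] (shorts k h j.+1) = [:: Sh k h j] ->
    alg_value alg P (U k h m.+2 j) = h.
  move=> j Hj E; rewrite /alg_value /alg_accepted /U run_cat E run_block.
    by rewrite big_seq1 /ilen /=; lra.
  rewrite /= andbT /idisj /= negb_or -!ltNge; apply/andP; split; lra.
have [A1|A1] : run_aux alg P [::] [::] (shorts k h 1) = [::] \/
               run_aux alg P [::] [::] (shorts k h 1) = [:: Sh k h 0]
  by apply: accs_nil.
  exfalso.
  case: (accs_ind A1 (m := m.+1) isT) => [An|[j [Hj Aj]]].
    have sizeS : size (shorts k h m.+2) = m.+2 by rewrite size_mkseq.
    have Hv : alg_value alg P (shorts k h m.+2) <= h.
      rewrite /alg_value /alg_accepted.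
      case: (accs_nil An) => ->; first by rewrite big_nil; lra.
      by rewrite big_seq1 /ilen /=; lra.
    have sortS : release_sorted (shorts k h m.+2).
      apply/(sortedP (0,0)) => i; rewrite sizeS => Hi.
      rewrite /shorts !nth_mkseq //; last by lia.
      by apply: mono.
    have twoS' : two_value k Delta (shorts k h m.+2).
      by apply/allP => x; rewrite /shorts /mkseq => /mapP [i _ ->]; rewrite twoS.
    have Hopt : m.+2%:R * h <= opt_value (shorts k h m.+2).
      have := @opt_ge R (shorts k h m.+2) setT.
      rewrite (eq_bigr (fun _ => h)); last first.
        move=> i _; have Hi : (i < m.+2)%N := leq_trans (ltn_ord i) (eq_leq sizeS).
        by rewrite /shorts nth_mkseq //; apply/eqP; rewrite twoS.
      rewrite sumr_const cardsT card_ord.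
      have -> : m.+2%:R * h = h *+ size (shorts k h m.+2) by rewrite sizeS mulr_natl.
      apply.
      apply/forallP => a; apply/implyP => _; apply/forallP => b; apply/implyP => _.
      apply/implyP => Hab.
      have Ha : (a < m.+2)%N := leq_trans (ltn_ord a) (eq_leq sizeS).
      have Hb : (b < m.+2)%N := leq_trans (ltn_ord b) (eq_leq sizeS).
      rewrite /shorts !nth_mkseq //.
      case: (ltngtP a b) => H.
      - by rewrite /idisj Sh_le //; lra.
      - by rewrite /idisj (@Sh_le R k h b a) ?orbT //; lra.
      - by move: Hab; rewrite (ord_inj H) eqxx.
    have := Hyp (shorts k h m.+2) P sortS twoS'.
    rewrite size_U // sizeS => /(_ erefl) Hc.
    have Hm := ler_wpM2l (ltW (lt_trans ltr01 D1)) Hv.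
    move: Hopt HnD Hc; set N := m.+2%:R => Hopt HnD Hc.
    have Hp : Delta * h + h < N * h.
      rewrite -subr_gt0.
      have -> : N * h - (Delta * h + h) = (N - (Delta + 1)) * h by ring.
      by rewrite mulr_gt0 // subr_gt0.
    rewrite -/h -kE in Hc Hm; lra.
  have Hj2 : (j.+1 < m.+2)%N by lia.
  have Hj1 : (j < m.+2)%N by lia.
  have := Hyp (U k h m.+2 j) P (sortU j (ltnW Hj2)) (twoU j).
  rewrite !size_U // => /(_ erefl).
  rewrite (runU j (ltnW Hj2) Aj) => Hc.
  have := @opt_ge2 R (U k h m.+2 j) 0 j.+1.
  have H0 : 0%N <> j.+1 by [].
  rewrite size_U // !nth_U //= ltnn => /(_ isT Hj2 H0).
  have Hj0 : (1 <= j)%N by lia.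
  have Hk1 := mono 1 j Hj0.
  rewrite /idisj /= mulr0 mulr1 in Hk1 *.
  have E1 : h <= k * j%:R + h / 2 by lra.
  rewrite add0r E1 orbT /= => /(_ isT isT).
  move/eqP: (twoS 0) => ->; move/eqP: (twoL j) => ->.
  rewrite -/h -kE in Hc *; lra.

exists P; split.
- by [].
- exact: sortU.
- exact: twoU.
rewrite runU //.
have := @opt_ge1 R P 1; rewrite size_U // nth_U //= => /(_ isT).
move/eqP: (twoL 0) => ->; lra.
Qed.
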